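(* Let $\mathbb{F}$ be an infinite field of arbitrary characteristic. Let $A_1,A_2,A_3,A_4,B_1,B_2,B_3,B_4\in M(2)$ satisfy: $\mathrm{tr}(A_i)=\mathrm{tr}(B_i)$ and $\det(A_i)=\det(B_i)$ for $1\le i\le 4$; $\mathrm{tr}(A_iA_j)=\mathrm{tr}(B_iB_j)$ for $1\le i<j\le 4$; and $\mathrm{tr}(A_iA_jA_k)=\mathrm{tr}(B_iB_jB_k)$ for $1\le i<j<k\le 4$. Then $\mathrm{tr}(A_1A_2A_3A_4)=\mathrm{tr}(B_1B_2B_3B_4)$.
   Context: $M(2)$ is the space of $2\times 2$ matrices over $\mathbb{F}$. *)

(* Defs.v *)
From HB Require Import structures.
From mathcomp Require Import all_boot all_order all_algebra.
Set Implicit Arguments. Unset Strict Implicit. Unset Printing Implicit Defensive.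
Import GRing.Theory.
Local Open Scope ring_scope.

Definition infinite_field (F : fieldType) : Prop :=
  forall s : seq F, exists x : F, x \notin s.

(* Main.v *)
Require Import Defs.
From HB Require Import structures.
From mathcomp Require Import all_boot all_order all_algebra.
From mathcomp Require Import ring.
Import GRing.Theory.
Local Open Scope ring_scope.

Lemma lift2 : lift ord0 ord0 = ord_max :> 'I_2.
Proof. by apply/val_inj. Qed.

Lemma trE2 (R : fieldType) (X : 'M[R]_2) : \tr X = X ord0 ord0 + X ord_max ord_max.
Proof. by rewrite /mxtrace 2!big_ord_recl big_ord0 addr0 lift2. Qed.

Lemma detE2 (R : fieldType) (X : 'M[R]_2) :
  \det X = X ord0 ord0 * X ord_max ord_max - X ord0 ord_max * X ord_max ord0.
Proof. rewrite (expand_det_row _ ord0) 2!big_ord_recl big_ord0 addr0 /cofactor !det_mx11 !mxE /=.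
have e1 : lift ord0 (0:'I_1) = ord_max :> 'I_2 by apply/val_inj.
have e2 : lift (ord_max : 'I_2) (0:'I_1) = ord0 :> 'I_2 by apply/val_inj.
rewrite e1 e2 /bump /= expr0 expr1. ring.
Qed.

Lemma mulE2 (R : fieldType) (X Y : 'M[R]_2) i j :
  (X *m Y) i j = X i ord0 * Y ord0 j + X i ord_max * Y ord_max j.
Proof. by rewrite mxE 2!big_ord_recl big_ord0 addr0 lift2. Qed.

Lemma keyWl (R : fieldType) (A0 A1 A2 A3 : 'M[R]_2) :
  let t0 := \tr A0 in let t1 := \tr A1 in let t2 := \tr A2 in let t3 := \tr A3 in
  let d0 := \det A0 in let d1 := \det A1 in let d2 := \det A2 in let d3 := \det A3 in
  let p01 := \tr (A0 *m A1) in let p02 := \tr (A0 *m A2) in let p03 := \tr (A0 *m A3) in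
  let p12 := \tr (A1 *m A2) in let p13 := \tr (A1 *m A3) in let p23 := \tr (A2 *m A3) in
  let q012 := \tr (A0 *m A1 *m A2) in let q013 := \tr (A0 *m A1 *m A3) in
  let q023 := \tr (A0 *m A2 *m A3) in let q123 := \tr (A1 *m A2 *m A3) in
  (\tr (A0 *m A1 *m A2 *m A3))^+2 = p23 * q012 * q013 + - (p12 * q013 * q023) + - (p02 * q013 * q123) + p01 * p03 * p12 * p23 + d3 * q012 * q012 + - (t3 * p03 * p12 * q012) + t3 * p02 * p12 * q013 + - (d2 * q013 * q013) + - (d2 * d3 * p01 * p01) + d2 * t3 * p01 * q013 + t2 * p03 * p12 * q013 + - (t2 * p02 * p13 * q013) + t2 * p01 * p23 * q013 + t2 * d3 * p01 * q012 + - (t2 * t3 * q012 * q013) + - (t2 * t3 * p01 * p03 * p12) + t2 * t2 * q013 * q013 + - (t2 * t2 * t3 * p01 * q013) + (3%:R) * d1 * p02 * p03 * p23 + - (d1 * t3 * p02 * q023) + - (t1 * p02 * p23 * q013) + t1 * p01 * p23 * q023 + t1 * t3 * q012 * q023 + - (t1 * d2 * p03 * q013) + t1 * t2 * q013 * q023 + - (t1 * t2 * p01 * p03 * p23) + t1 * t2 * t3 * p03 * q012 + t1 * t2 * t3 * p02 * q013 + - (t1 * t2 * t3 * p01 * q023) + - (t1 * t2 * t2 * p03 * q013) + t1 * t2 * t2 * t3 * p01 * p03 + - (d0 * p12 * p13 * p23) + - (d0 * t3 * p12 * q123) + d0 * t3 * t3 * p12 * p12 + - (d0 * t2 * t3 *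 p12 * p13) + d0 * d1 * p23 * p23 + - (d0 * d1 * d2 * t3 * t3) + - ((3%:R) * d0 * d1 * t2 * t3 * p23) + - ((3%:R) * d0 * d1 * t2 * t2 * d3) + d0 * t1 * p23 * q123 + d0 * t1 * d2 * t3 * p13 + - (d0 * t1 * t2 * p13 * p23) + - (d0 * t1 * t2 * t3 * q123) + d0 * t1 * t2 * t2 * t3 * p13 + - (d0 * t1 * t1 * p23 * p23) + - (d0 * t1 * t1 * t2 * t2 * t3 * t3) + t0 * d2 * p13 * q013 + - (t0 * d1 * p23 * q023) + - (t0 * d1 * d2 * t3 * p03) + t0 * d1 * t2 * t3 * q023 + (2%:R) * p03 * q012 * q123 + (2%:R) * d1 * d3 * p02 * p02 + (2%:R) * d1 * d2 * p03 * p03 + - ((2%:R) * d1 * t2 * t3 * p02 * p03) + - ((2%:R) * t1 * p03 * p23 * q012) + - ((2%:R) * t1 * d3 * p02 * q012) + - ((2%:R) * d0 * d3 * p12 * p12) + - ((2%:R) * d0 * d2 * p13 * p13) + (2%:R) * d0 * t2 * p13 * q123 + (4%:R) * d0 * d1 * d2 * d3 + (2%:R) * d0 * d1 * t2 * t2 * t3 * t3 + (2%:R) * d0 * t1 * t2 * d3 * p12 + (2%:R) * d0 * t1 * t1 * t2 * t3 * p23.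
Proof.
move=> t0 t1 t2 t3 d0 d1 d2 d3 p01 p02 p03 p12 p13 p23 q012 q013 q023 q123.
rewrite /t0 /t1 /t2 /t3 /d0 /d1 /d2 /d3 /p01 /p02 /p03 /p12 /p13 /p23 /q012 /q013 /q023 /q123.
rewrite !trE2 ?detE2 !mulE2.
ring.
Qed.

Lemma keyRl (R : fieldType) (A0 A1 A2 A3 : 'M[R]_2) :
  let t0 := \tr A0 in let t1 := \tr A1 in let t2 := \tr A2 in let t3 := \tr A3 in
  let d0 := \det A0 in let d1 := \det A1 in let d2 := \det A2 in let d3 := \det A3 in
  let p01 := \tr (A0 *m A1) in let p02 := \tr (A0 *m A2) in let p03 := \tr (A0 *m A3) in
  let p12 := \tr (A1 *m A2) in let p13 := \tr (A1 *m A3) in let p23 := \tr (A2 *m A3) in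
  let q012 := \tr (A0 *m A1 *m A2) in let q013 := \tr (A0 *m A1 *m A3) in
  let q023 := \tr (A0 *m A2 *m A3) in let q123 := \tr (A1 *m A2 *m A3) in
  2%:R * \tr (A0 *m A1 *m A2 *m A3) = p03 * p12 + - (p02 * p13) + p01 * p23 + t3 * q012 + t2 * q013 + - (t2 * t3 * p01) + t1 * q023 + - (t1 * t2 * p03) + t0 * q123 + - (t0 * t3 * p12) + - (t0 * t1 * p23) + t0 * t1 * t2 * t3.
Proof.
move=> t0 t1 t2 t3 d0 d1 d2 d3 p01 p02 p03 p12 p13 p23 q012 q013 q023 q123.
rewrite /t0 /t1 /t2 /t3 /d0 /d1 /d2 /d3 /p01 /p02 /p03 /p12 /p13 /p23 /q012 /q013 /q023 /q123.
rewrite !trE2 ?detE2 !mulE2.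
ring.
Qed.

Definition Wp (R : fieldType) (t0 t1 t2 t3 d0 d1 d2 d3 p01 p02 p03 p12 p13 p23 q012 q013 q023 q123 : R) : R :=
  p23 * q012 * q013 + - (p12 * q013 * q023) + - (p02 * q013 * q123) + p01 * p03 * p12 * p23 + d3 * q012 * q012 + - (t3 * p03 * p12 * q012) + t3 * p02 * p12 * q013 + - (d2 * q013 * q013) + - (d2 * d3 * p01 * p01) + d2 * t3 * p01 * q013 + t2 * p03 * p12 * q013 + - (t2 * p02 * p13 * q013) + t2 * p01 * p23 * q013 + t2 * d3 * p01 * q012 + - (t2 * t3 * q012 * q013) + - (t2 * t3 * p01 * p03 * p12) + t2 * t2 * q013 * q013 + - (t2 * t2 * t3 * p01 * q013) + (3%:R) * d1 * p02 * p03 * p23 + - (d1 * t3 * p02 * q023) + - (t1 * p02 * p23 * q013) + t1 * p01 * p23 * q023 + t1 * t3 * q012 * q023 + - (t1 * d2 * p03 * q013) + t1 * t2 * q013 * q023 + - (t1 * t2 * p01 * p03 * p23) + t1 * t2 * t3 * p03 * q012 + t1 * t2 * t3 * p02 * q013 + - (t1 * t2 * t3 * p01 * q023) + - (t1 * t2 * t2 * p03 * q013) + t1 * t2 * t2 * t3 * p01 * p03 + - (d0 * p12 * p13 * p23) + - (d0 * t3 * p12 * q123) + d0 * t3 * t3 * p12 * p12 + - (d0 * t2 * t3 * p12 * p13) + d0 * d1 * p23 * p23 + - (d0 * d1 * d2 * t3 * t3) + - ((3%:R) * d0 * d1 * t2 * t3 * p23) + - ((3%:R) * d0 * d1 * t2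 * t2 * d3) + d0 * t1 * p23 * q123 + d0 * t1 * d2 * t3 * p13 + - (d0 * t1 * t2 * p13 * p23) + - (d0 * t1 * t2 * t3 * q123) + d0 * t1 * t2 * t2 * t3 * p13 + - (d0 * t1 * t1 * p23 * p23) + - (d0 * t1 * t1 * t2 * t2 * t3 * t3) + t0 * d2 * p13 * q013 + - (t0 * d1 * p23 * q023) + - (t0 * d1 * d2 * t3 * p03) + t0 * d1 * t2 * t3 * q023 + (2%:R) * p03 * q012 * q123 + (2%:R) * d1 * d3 * p02 * p02 + (2%:R) * d1 * d2 * p03 * p03 + - ((2%:R) * d1 * t2 * t3 * p02 * p03) + - ((2%:R) * t1 * p03 * p23 * q012) + - ((2%:R) * t1 * d3 * p02 * q012) + - ((2%:R) * d0 * d3 * p12 * p12) + - ((2%:R) * d0 * d2 * p13 * p13) + (2%:R) * d0 * t2 * p13 * q123 + (4%:R) * d0 * d1 * d2 * d3 + (2%:R) * d0 * d1 * t2 * t2 * t3 * t3 + (2%:R) * d0 * t1 * t2 * d3 * p12 + (2%:R) * d0 * t1 * t1 * t2 * t3 * p23.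

Definition Rp (R : fieldType) (t0 t1 t2 t3 d0 d1 d2 d3 p01 p02 p03 p12 p13 p23 q012 q013 q023 q123 : R) : R :=
  p03 * p12 + - (p02 * p13) + p01 * p23 + t3 * q012 + t2 * q013 + - (t2 * t3 * p01) + t1 * q023 + - (t1 * t2 * p03) + t0 * q123 + - (t0 * t3 * p12) + - (t0 * t1 * p23) + t0 * t1 * t2 * t3.

Lemma keyW (R : fieldType) (A0 A1 A2 A3 : 'M[R]_2) :
  (\tr (A0 *m A1 *m A2 *m A3))^+2 = @Wp R (\tr A0) (\tr A1) (\tr A2) (\tr A3) (\det A0) (\det A1) (\det A2) (\det A3) (\tr (A0 *m A1)) (\tr (A0 *m A2)) (\tr (A0 *m A3)) (\tr (A1 *m A2)) (\tr (A1 *m A3)) (\tr (A2 *m A3)) (\tr (A0 *m A1 *m A2)) (\tr (A0 *m A1 *m A3)) (\tr (A0 *m A2 *m A3)) (\tr (A1 *m A2 *m A3)).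
Proof. exact: keyWl. Qed.

Lemma keyR (R : fieldType) (A0 A1 A2 A3 : 'M[R]_2) :
  2%:R * \tr (A0 *m A1 *m A2 *m A3) = @Rp R (\tr A0) (\tr A1) (\tr A2) (\tr A3) (\det A0) (\det A1) (\det A2) (\det A3) (\tr (A0 *m A1)) (\tr (A0 *m A2)) (\tr (A0 *m A3)) (\tr (A1 *m A2)) (\tr (A1 *m A3)) (\tr (A2 *m A3)) (\tr (A0 *m A1 *m A2)) (\tr (A0 *m A1 *m A3)) (\tr (A0 *m A2 *m A3)) (\tr (A1 *m A2 *m A3)).
Proof. exact: keyRl. Qed.

Lemma sq_eq_2 (F : fieldType) (a b : F) :
  a ^+ 2 = b ^+ 2 -> 2%:R * a = 2%:R * b -> a = b.
Proof.
move=> h1 h2; apply/eqP; rewrite -subr_eq0.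
have : (a - b) ^+ 2 = 0.
  have -> : (a - b) ^+ 2 = (a ^+ 2 - b ^+ 2) - b * (2%:R * a - 2%:R * b) by ring.
  by rewrite h1 h2 !subrr mulr0 subr0.
by move/eqP; rewrite expf_eq0 /=.
Qed.

Theorem proposition1 (F : fieldType) (hF : infinite_field F)
  (A B : 'I_4 -> 'M[F]_2)
  (htr : forall i : 'I_4, \tr (A i) = \tr (B i))
  (hdet : forall i : 'I_4, \det (A i) = \det (B i))
  (htr2 : forall i j : 'I_4, (i < j)%N -> \tr (A i *m A j) = \tr (B i *m B j))
  (htr3 : forall i j k : 'I_4, (i < j)%N -> (j < k)%N ->
          \tr (A i *m A j *m A k) = \tr (B i *m B j *m B k)) :
  \tr (A (inord 0) *m A (inord 1) *m A (inord 2) *m A (inord 3))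
  = \tr (B (inord 0) *m B (inord 1) *m B (inord 2) *m B (inord 3)).
Proof.
have ht0 := htr (inord 0).
have ht1 := htr (inord 1).
have ht2 := htr (inord 2).
have ht3 := htr (inord 3).
have hd0 := hdet (inord 0).
have hd1 := hdet (inord 1).
have hd2 := hdet (inord 2).
have hd3 := hdet (inord 3).
have hp01 := htr2 (inord 0) (inord 1) ltac:(by rewrite !inordK).
have hp02 := htr2 (inord 0) (inord 2) ltac:(by rewrite !inordK).
have hp03 := htr2 (inord 0) (inord 3) ltac:(by rewrite !inordK).
have hp12 := htr2 (inord 1) (inord 2) ltac:(by rewrite !inordK).
have hp13 := htr2 (inord 1) (inord 3) ltac:(by rewrite !inordK).
have hp23 := htr2 (inord 2) (inord 3) ltac:(by rewrite !inordK).
have hq012 := htr3 (inord 0) (inord 1) (inord 2) ltac:(by rewrite !inordK) ltac:(by rewrite !inordK).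
have hq013 := htr3 (inord 0) (inord 1) (inord 3) ltac:(by rewrite !inordK) ltac:(by rewrite !inordK).
have hq023 := htr3 (inord 0) (inord 2) (inord 3) ltac:(by rewrite !inordK) ltac:(by rewrite !inordK).
have hq123 := htr3 (inord 1) (inord 2) (inord 3) ltac:(by rewrite !inordK) ltac:(by rewrite !inordK).
have e1 := @keyW F (A (inord 0)) (A (inord 1)) (A (inord 2)) (A (inord 3)).
have e2 := @keyW F (B (inord 0)) (B (inord 1)) (B (inord 2)) (B (inord 3)).
have r1 := @keyR F (A (inord 0)) (A (inord 1)) (A (inord 2)) (A (inord 3)).
have r2 := @keyR F (B (inord 0)) (B (inord 1)) (B (inord 2)) (B (inord 3)).
apply: sq_eq_2.
  by rewrite e1 e2 ht0 ht1 ht2 ht3 hd0 hd1 hd2 hd3 hp01 hp02 hp03 hp12 hp13 hp23 hq012 hq013 hq023 hq123.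
by rewrite r1 r2 ht0 ht1 ht2 ht3 hd0 hd1 hd2 hd3 hp01 hp02 hp03 hp12 hp13 hp23 hq012 hq013 hq023 hq123.
Qed.
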